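(* Let $\alpha$ be an implicational formula that is a tautology of Propositional Minimal Implicational Logic. Then there is a proof of $\Rightarrow\alpha$ in the sequent calculus $\mathbf{LJ}^{\rightarrow}$ (without cut) of height at most $|\alpha|\cdot 2^{|\alpha|+1}$.
   Context: Formulas are built from atoms using only $\rightarrow$; $|\alpha|$ denotes the degree of $\alpha$, i.e. the number of occurrences of atomic symbols and connectives in $\alpha$. A formula is a tautology iff it is forced at every world of every Kripke model $\langle U,\preceq,\mathcal V\rangle$ ($\preceq$ a partial order, $\mathcal V$ monotone; $\alpha_1\rightarrow\alpha_2$ forced at $i$ iff for all $j\succeq i$, if $\alpha_1$ forced at $j$ then $\alpha_2$ forced at $j$). $\mathbf{LJ}^{\rightarrow}$ has sequents $\Delta\Rightarrow\gamma$ with exactly one formula on the right and rules: axiom $\Delta,\gamma\Rightarrow\gamma$; weakening, contraction and exchange on the left; $\rightarrow$-right: from $\Delta,\alpha\Rightarrow\beta$ infer $\Delta\Rightarrow\alpha\rightarrow\beta$; $\rightarrow$-left: from $\Delta,\alpha\rightarrow\beta\Rightarrow\alpha$ and $\Delta,\alpha\rightarrow\beta,\beta\Rightarrow\gamma$ infer $\Delta,\alpha\rightarrow\beta\Rightarrow\gamma$. *)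

(* Defs.v *)
From Stdlib Require Import List Arith.
Import ListNotations.

Inductive form : Type :=
| Atom : nat -> form
| Imp : form -> form -> form.

Fixpoint degree (a : form) : nat :=
  match a with
  | Atom _ => 1
  | Imp a1 a2 => degree a1 + degree a2 + 1
  end.

Fixpoint forces {U : Type} (le : U -> U -> Prop) (V : U -> nat -> Prop)
    (i : U) (a : form) : Prop :=
  match a with
  | Atom n => V i n
  | Imp a1 a2 => forall j, le i j -> forces le V j a1 -> forces le V j a2
  end.

Definition partial_order {U : Type} (le : U -> U -> Prop) : Prop :=
  (forall x, le x x) /\
  (forall x y z, le x y -> le y z -> le x z) /\
  (forall x y, le x y -> le y x -> x = y).

Definition monotone_val {U : Type} (le : U -> U -> Prop) (V : U -> nat -> Prop) : Prop :=
  forall i j n, le i j -> V i n -> V j n.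

Definition tautology (a : form) : Prop :=
  forall (U : Type) (le : U -> U -> Prop) (V : U -> nat -> Prop),
    partial_order le -> monotone_val le V -> forall i : U, forces le V i a.

(* deriv D g h : there is a cut-free LJ-> derivation of D => g of height h,
   where height = number of sequents on the longest branch (an axiom has height 1).
   Antecedents are lists; "D, x" is D ++ [x]. *)
Inductive deriv : list form -> form -> nat -> Prop :=
| d_ax : forall D g, deriv (D ++ [g]) g 1
| d_weak : forall D d g h, deriv D g h -> deriv (D ++ [d]) g (S h)
| d_contr : forall D d g h, deriv (D ++ [d; d]) g h -> deriv (D ++ [d]) g (S h)
| d_exch : forall D1 D2 d1 d2 g h,
    deriv (D1 ++ [d1; d2] ++ D2) g h -> deriv (D1 ++ [d2; d1] ++ D2) g (S h)
| d_impR : forall D a b h, deriv (D ++ [a]) b h -> deriv D (Imp a b) (S h)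
| d_impL : forall D a b g h1 h2,
    deriv (D ++ [Imp a b]) a h1 ->
    deriv (D ++ [Imp a b; b]) g h2 ->
    deriv (D ++ [Imp a b]) g (S (Nat.max h1 h2)).

(* Main.v *)
Require Import Defs.
From Stdlib Require Import List Arith Lia Permutation.
From Stdlib Require Import Classical FunctionalExtensionality PropExtensionality ProofIrrelevance.
Import ListNotations.

Fixpoint sub (a : form) : list form :=
  match a with
  | Atom n => [Atom n]
  | Imp a1 a2 => Imp a1 a2 :: sub a1 ++ sub a2
  end.

Lemma sub_len a : length (sub a) = degree a.
Proof. induction a; simpl; auto. rewrite length_app. lia. Qed.

Lemma sub_self a : In a (sub a).
Proof. destruct a; simpl; auto. Qed.

Lemma sub_trans x y : In y (sub x) -> incl (sub y) (sub x).
Proof.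
  induction x; simpl; intros H.
  - destruct H as [<-|[]]. apply incl_refl.
  - destruct H as [<-|H].
    + apply incl_refl.
    + apply in_app_or in H. destruct H as [H|H].
      * intros z Hz. right. apply in_or_app. left. apply IHx1; auto.
      * intros z Hz. right. apply in_or_app. right. apply IHx2; auto.
Qed.

Lemma sub_closed x a b : In (Imp a b) (sub x) -> In a (sub x) /\ In b (sub x).
Proof.
  intros H. apply sub_trans in H. split; apply H; simpl; right; apply in_or_app;
  [left|right]; apply sub_self.
Qed.

Definition closed (l : list form) := forall a b, In (Imp a b) l -> In a l /\ In b l.

Definition ext (G : form -> Prop) (a : form) := fun x => G x \/ x = a.

Inductive SD : (form -> Prop) -> form -> nat -> Prop :=
| sd_ax : forall G g h, G g -> SD G g (S h)
| sd_impR : forall G a b h, SD (ext G a) b h -> SD G (Imp a b) (S h)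
| sd_impL : forall G a b g h, G (Imp a b) -> SD G a h -> SD (ext G b) g h -> SD G g (S h).

Lemma SD_mono G g h : SD G g h -> forall h', h <= h' -> SD G g h'.
Proof.
  induction 1; intros h' Hle; destruct h' as [|h']; try lia.
  - apply sd_ax; auto.
  - apply sd_impR. apply IHSD. lia.
  - eapply sd_impL; eauto. apply IHSD1; lia. apply IHSD2; lia.
Qed.

Lemma SD_ext G g h : SD G g h -> forall G', (forall x, G x <-> G' x) -> SD G' g h.
Proof.
  induction 1; intros G' HG.
  - apply sd_ax. apply HG; auto.
  - apply sd_impR. apply IHSD. intros x. unfold ext. rewrite HG. tauto.
  - eapply sd_impL. apply HG; eauto. apply IHSD1; auto.
    apply IHSD2. intros x. unfold ext. rewrite HG. tauto.
Qed.

Lemma weaken_tail L2 : forall D g h, deriv D g h -> deriv (D ++ L2) g (h + length L2).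
Proof.
  induction L2 as [|d L2 IH] using rev_ind; intros D g h H.
  - rewrite app_nil_r. simpl. rewrite Nat.add_0_r. auto.
  - rewrite app_assoc, length_app. simpl.
    replace (h + (length L2 + 1)) with (S (h + length L2)) by lia.
    apply d_weak. apply IH. auto.
Qed.

Lemma move_to_end L2 : forall L1 x g h, deriv (L1 ++ L2 ++ [x]) g h ->
  deriv (L1 ++ [x] ++ L2) g (h + length L2).
Proof.
  induction L2 as [|y L2 IH]; intros L1 x g h H.
  - simpl in *. rewrite Nat.add_0_r. auto.
  - simpl. replace (h + S (length L2)) with (S (h + length L2)) by lia.
    replace (L1 ++ x :: y :: L2) with (L1 ++ [x; y] ++ L2) by reflexivity.
    apply d_exch.
    replace (L1 ++ [y; x] ++ L2) with ((L1 ++ [y]) ++ [x] ++ L2)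
      by (rewrite <- app_assoc; reflexivity).
    apply IH. rewrite <- app_assoc. exact H.
Qed.

Lemma NoDup_snoc (L : list form) a : NoDup L -> ~ In a L -> NoDup (L ++ [a]).
Proof.
  intros H1 H2. apply Permutation_NoDup with (a :: L).
  apply Permutation_cons_append. constructor; auto.
Qed.

Lemma translate (l : list form) (Hcl : closed l) : forall G g h, SD G g h ->
  forall L, NoDup L -> (forall x, In x L <-> G x) -> incl L l -> In g l ->
  exists h', h' <= (length l + 2) * h /\ deriv L g h'.
Proof.
  induction 1; intros L HND HL Hinc Hg.
  -
    apply HL in H. apply in_split in H. destruct H as [L1 [L2 ->]].
    exists (1 + length L2). split.
    + assert (Hlen := NoDup_incl_length HND Hinc). rewrite length_app in Hlen.
      simpl in Hlen. nia.
    + replace (L1 ++ g :: L2) with ((L1 ++ [g]) ++ L2) by (rewrite <- app_assoc; reflexivity).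
      apply weaken_tail. apply d_ax.
  - destruct (Hcl _ _ Hg) as [Ha Hb].
    destruct (classic (In a L)) as [HaL|HaL].
    + destruct (IHSD L HND) as [h1 [Hh1 Hd]]; auto.
      { intros x. unfold ext. rewrite HL. split; [tauto|]. intros [Hx| ->]; auto. apply HL; auto. }
      exists (S (S h1)). split; [nia|].
      apply d_impR. apply d_weak. auto.
    + destruct (IHSD (L ++ [a])) as [h1 [Hh1 Hd]]; auto.
      { apply NoDup_snoc; auto. }
      { intros x. unfold ext. rewrite in_app_iff, HL. simpl. intuition. }
      { intros x Hx. apply in_app_or in Hx. destruct Hx as [Hx|[<-|[]]]; auto. }
      exists (S h1). split; [nia|]. apply d_impR. auto.
  -
    assert (HabL : In (Imp a b) L) by (apply HL; auto).
    destruct (Hcl a b (Hinc _ HabL)) as [Ha Hb].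
    apply in_split in HabL. destruct HabL as [L1 [L2 ->]].
    assert (Hlen := NoDup_incl_length HND Hinc). rewrite length_app in Hlen. simpl in Hlen.
    set (D := L1 ++ L2).
    assert (HP : Permutation (L1 ++ Imp a b :: L2) (D ++ [Imp a b])).
    { unfold D. rewrite <- app_assoc. apply Permutation_app_head. apply Permutation_cons_append. }
    assert (HND' : NoDup (D ++ [Imp a b])) by (eapply Permutation_NoDup; eauto).
    assert (HL' : forall x, In x (D ++ [Imp a b]) <-> G x).
    { intros x. rewrite <- HL. split; apply Permutation_in; auto. symmetry; auto. }
    assert (Hinc' : incl (D ++ [Imp a b]) l).
    { intros x Hx. apply Hinc. eapply Permutation_in; [symmetry; eauto|]; auto. }
    destruct (IHSD1 _ HND' HL' Hinc' Ha) as [h1 [Hh1 Hd1]].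
    assert (H2 : exists h2, h2 <= (length l + 2) * h + 1 /\ deriv (D ++ [Imp a b; b]) g h2).
    { destruct (classic (G b)) as [HbG|HbG].
      - destruct (IHSD2 _ HND') as [h2 [Hh2 Hd2]]; auto.
        { intros x. unfold ext. rewrite <- HL'. split; [tauto|]. intros [Hx| ->]; auto. apply HL'; auto. }
        exists (S h2). split; [lia|].
        replace (D ++ [Imp a b; b]) with ((D ++ [Imp a b]) ++ [b]) by (rewrite <- app_assoc; reflexivity).
        apply d_weak. auto.
      - destruct (IHSD2 ((D ++ [Imp a b]) ++ [b])) as [h2 [Hh2 Hd2]]; auto.
        { apply NoDup_snoc; auto. rewrite HL'. auto. }
        { intros x. unfold ext. rewrite in_app_iff, HL'. simpl. intuition. }
        { intros x Hx. apply in_app_or in Hx. destruct Hx as [Hx|[<-|[]]]; auto. }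
        exists h2. split; [lia|]. rewrite <- app_assoc in Hd2. exact Hd2. }
    destruct H2 as [h2 [Hh2 Hd2]].
    exists (S (Nat.max h1 h2) + length L2). split; [nia|].
    replace (L1 ++ Imp a b :: L2) with (L1 ++ [Imp a b] ++ L2) by reflexivity.
    apply move_to_end. rewrite app_assoc. fold D. apply d_impL; auto.
Qed.

Fixpoint iter (F : (form -> Prop) -> form -> Prop) (i : nat) : form -> Prop :=
  match i with 0 => fun _ => False | S i => F (iter F i) end.

Definition monoF (F : (form -> Prop) -> form -> Prop) :=
  forall X Y : form -> Prop, (forall x, X x -> Y x) -> forall x, F X x -> F Y x.

Lemma iter_chain F (Fm : monoF F) : forall i x, iter F i x -> iter F (S i) x.
Proof.
  induction i; simpl; [tauto|]. intros x H. apply (Fm (iter F i)); auto.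
Qed.

Lemma iter_le F (Fm : monoF F) i j : i <= j -> forall x, iter F i x -> iter F j x.
Proof. induction 1; auto. intros x Hx. apply iter_chain; auto. Qed.

Lemma iter_fix F (Fm : monoF F) k : (forall x, iter F (S k) x -> iter F k x) ->
  forall j x, iter F j x -> iter F k x.
Proof.
  intros Hk.
  assert (Hj : forall j x, iter F (k + j) x -> iter F k x).
  { induction j; intros x.
    - rewrite Nat.add_0_r. auto.
    - rewrite Nat.add_succ_r. simpl. intros H. apply Hk. simpl.
      apply (Fm (iter F (k + j))); auto. }
  intros j x Hx. destruct (le_lt_dec j k).
  - eapply iter_le; eauto.
  - apply (Hj (j - k)). replace (k + (j - k)) with j by lia. auto.
Qed.

Lemma iter_count F (Fm : monoF F) : forall k,
  (forall j, j < k -> ~ (forall x, iter F (S j) x -> iter F j x)) ->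
  exists L, NoDup L /\ length L = k /\ forall x, In x L -> iter F k x.
Proof.
  induction k; intros Hk.
  - exists []. simpl. repeat split; auto. constructor.
  - destruct IHk as [L [HND [Hlen Hin]]]. { intros j Hj. apply Hk. lia. }
    assert (Hn := Hk k (Nat.lt_succ_diag_r k)).
    apply not_all_ex_not in Hn. destruct Hn as [x Hx].
    apply imply_to_and in Hx. destruct Hx as [Hx1 Hx2].
    exists (x :: L). simpl. repeat split.
    + constructor; auto.
    + lia.
    + intros y [<-|Hy]; auto. apply iter_chain; auto.
Qed.

Lemma iter_stab F (Fm : monoF F) (l : list form) (Fl : forall X x, F X x -> In x l) :
  forall i x, iter F i x -> iter F (length l) x.
Proof.
  destruct (classic (exists j, j <= length l /\ forall x, iter F (S j) x -> iter F j x))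
    as [[j [Hj Hfix]] | Hno].
  - intros i x H. apply (iter_le F Fm j (length l) Hj). eapply iter_fix; eauto.
  - exfalso. destruct (iter_count F Fm (S (length l))) as [L [HL [Hlen Hin]]].
    { intros j Hj Hc. apply Hno. exists j. split; [lia|auto]. }
    assert (length L <= length l); [|lia].
    apply NoDup_incl_length; auto. intros x Hx. apply Hin in Hx. simpl in Hx. eapply Fl; eauto.
Qed.

Definition Fst (l : list form) (G : form -> Prop) (X : form -> Prop) (g : form) : Prop :=
  In g l /\
  (G g \/
   (exists a b, g = Imp a b /\ ((G a /\ X b) \/ (~ G a /\ exists h, SD (ext G a) b h))) \/
   (exists a b, G (Imp a b) /\ X a /\ ((G b /\ X g) \/ (~ G b /\ exists h, SD (ext G b) g h)))).

Lemma Fst_mono l G : monoF (Fst l G).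
Proof. intros X Y HXY x. unfold Fst. firstorder. Qed.

Definition room (l : list form) (G : form -> Prop) k :=
  forall L, NoDup L -> (forall x, In x L -> In x l /\ ~ G x) -> length L <= k.

Lemma room_ext l G k a : room l G k -> In a l -> ~ G a ->
  exists k', k = S k' /\ room l (ext G a) k'.
Proof.
  intros Hr Ha HGa. destruct k as [|k].
  - exfalso. assert (H := Hr [a]). simpl in H.
    assert (1 <= 0); [|lia]. apply H. repeat constructor; auto.
    intros x [<-|[]]; auto.
  - exists k. split; auto. intros L HND HL.
    assert (length (a :: L) <= S k); [|simpl in *; lia].
    apply Hr.
    + constructor; auto. intros Hin. apply HL in Hin. unfold ext in Hin. tauto.
    + intros x [<-|Hx]; auto. apply HL in Hx. unfold ext in Hx. tauto.
Qed.

Lemma compress_step l (Hcl : closed l) G k (HG : forall x, G x -> In x l)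
  (Hbig : forall a y h, In a l -> ~ G a -> In y l -> SD (ext G a) y h ->
     SD (ext G a) y (k * length l)) :
  forall g h, In g l -> SD G g h -> SD G g (S k * length l).
Proof.
  set (N := length l).
  assert (HA : forall i x, iter (Fst l G) i x -> SD G x (k * N + i)).
  { induction i; simpl; [contradiction|]. intros x [Hx H].
    rewrite Nat.add_succ_r.
    destruct H as [H|[[a [b [-> [[Ga Xb]|[nGa [h Hh]]]]]]|[a [b [Gab [Xa [[Gb Xg]|[nGb [h Hh]]]]]]]]].
    - apply sd_ax; auto.
    - apply sd_impR. apply IHi in Xb. eapply SD_ext; eauto.
      intros y. unfold ext. split; [auto|]. intros [Hy| ->]; auto.
    - destruct (Hcl a b Hx) as [Ha Hb]. apply sd_impR.
      apply SD_mono with (k * N); [|lia]. eapply Hbig; eauto.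
    - eapply sd_impL; eauto. apply IHi in Xg. eapply SD_ext; eauto.
      intros y. unfold ext. split; [auto|]. intros [Hy| ->]; auto.
    - destruct (Hcl a b (HG _ Gab)) as [Ha Hb]. eapply sd_impL; eauto.
      apply SD_mono with (k * N); [|lia]. eapply Hbig; eauto. }
  assert (HB : forall G' g h, SD G' g h -> (forall x, G' x <-> G x) -> In g l ->
     iter (Fst l G) h g).
  { induction 1; intros HG' Hg; simpl; split; auto.
    - left. apply HG'. auto.
    - right. left. exists a, b. split; auto.
      destruct (Hcl a b Hg) as [Ha Hb].
      destruct (classic (G a)) as [Ga|nGa].
      + left. split; auto. apply IHSD; auto. intros x. unfold ext. rewrite HG'.
        split; [intros [Hx| ->]; auto|auto].
      + right. split; auto. exists h. eapply SD_ext; eauto.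
        intros x. unfold ext. rewrite HG'. tauto.
    - right. right. exists a, b.
      assert (Gab : G (Imp a b)) by (apply HG'; auto).
      destruct (Hcl a b (HG _ Gab)) as [Ha Hb].
      split; auto. split; [apply IHSD1; auto|].
      destruct (classic (G b)) as [Gb|nGb].
      + left. split; auto. apply IHSD2; auto. intros x. unfold ext. rewrite HG'.
        split; [intros [Hx| ->]; auto|auto].
      + right. split; auto. exists h. eapply SD_ext; eauto.
        intros x. unfold ext. rewrite HG'. tauto. }
  intros g h Hg Hsd.
  replace (S k * N) with (k * N + N) by (simpl; lia).
  apply HA. apply (iter_stab _ (Fst_mono l G) l) with h.
  - intros X x [Hx _]; auto.
  - eapply HB; eauto. tauto.
Qed.

Lemma compress l (Hcl : closed l) : forall k G, (forall x, G x -> In x l) -> room l G k ->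
  forall g h, In g l -> SD G g h -> SD G g (S k * length l).
Proof.
  induction k as [|k IHk]; intros G HG Hr; apply compress_step; auto.
  - intros a y h Ha nGa. destruct (room_ext l G 0 a Hr Ha nGa) as [k' [Hk _]]. discriminate.
  - intros a y h Ha nGa Hy Hsd. destruct (room_ext l G (S k) a Hr Ha nGa) as [k' [Hk Hr']].
    injection Hk as <-. eapply IHk; eauto.
    intros x [Hx| ->]; auto.
Qed.

Definition Pr (G : form -> Prop) g := exists h, SD G g h.
Definition sat (D : form -> Prop) := forall a b, D (Imp a b) -> Pr D a -> D b.

Lemma saturate l (Hcl : closed l) : forall k G g, (forall x, G x -> In x l) -> room l G k ->
  ~ Pr G g -> exists D, (forall x, G x -> D x) /\ (forall x, D x -> In x l) /\ sat D /\ ~ Pr D g.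
Proof.
  induction k as [|k IHk]; intros G g HG Hr nPr;
  (destruct (classic (sat G)) as [Hs|Hs]; [exists G; auto|]);
  unfold sat in Hs;
  apply not_all_ex_not in Hs; destruct Hs as [a Hs];
  apply not_all_ex_not in Hs; destruct Hs as [b Hs];
  apply imply_to_and in Hs; destruct Hs as [Gab Hs];
  apply imply_to_and in Hs; destruct Hs as [[h1 Ha] nGb];
  destruct (Hcl a b (HG _ Gab)) as [_ Hb];
  destruct (room_ext l G _ b Hr Hb nGb) as [k' [Hk Hr']]; try discriminate.
  injection Hk as <-.
  destruct (IHk (ext G b) g) as [D [HD1 [HD2 [HD3 HD4]]]]; auto.
  - intros x [Hx| ->]; auto.
  - intros [h2 Hh2]. apply nPr. exists (S (Nat.max h1 h2)).
    eapply sd_impL; eauto; eapply SD_mono; eauto; lia.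
  - exists D. repeat split; auto. intros x Hx. apply HD1. left; auto.
Qed.

Lemma room_all l G : room l G (length l).
Proof.
  intros L HND HL. apply NoDup_incl_length; auto. intros x Hx; apply HL; auto.
Qed.

Definition W (l : list form) := { D : form -> Prop | (forall x, D x -> In x l) /\ sat D }.
Definition Wle l (w1 w2 : W l) := forall x, proj1_sig w1 x -> proj1_sig w2 x.
Definition WV l (w : W l) n := proj1_sig w (Atom n).

Lemma W_po l : partial_order (Wle l).
Proof.
  unfold Wle. split; [|split]; auto.
  intros [D1 H1] [D2 H2] Ha Hb. simpl in *.
  assert (D1 = D2).
  { apply functional_extensionality. intros x. apply propositional_extensionality. split; auto. }
  subst. f_equal. apply proof_irrelevance.
Qed.

Lemma W_mono l : monotone_val (Wle l) (WV l).
Proof. unfold monotone_val, Wle, WV. auto. Qed.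

Lemma truth l (Hcl : closed l) : forall psi, In psi l -> forall w : W l,
  (proj1_sig w psi -> forces (Wle l) (WV l) w psi) /\
  (~ Pr (proj1_sig w) psi -> ~ forces (Wle l) (WV l) w psi).
Proof.
  induction psi as [n|c IHc d IHd]; intros Hin w.
  - simpl. unfold WV. split; auto. intros nPr HV. apply nPr. exists 1. apply sd_ax. auto.
  - destruct (Hcl c d Hin) as [Hc Hd]. split.
    + intros Hw j Hle Hfc. simpl in Hfc.
      assert (Hp : Pr (proj1_sig j) c).
      { apply NNPP. intros nPr. apply (proj2 (IHc Hc j) nPr Hfc). }
      destruct j as [Dj [HjP Hjs]]. simpl in *.
      apply (proj1 (IHd Hd _)). simpl. apply (Hjs c d); auto. apply Hle; auto.
    + intros nPr Hf.
      assert (nPr' : ~ Pr (ext (proj1_sig w) c) d).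
      { intros [h Hh]. apply nPr. exists (S h). apply sd_impR. auto. }
      destruct (saturate l Hcl (length l) (ext (proj1_sig w) c) d) as [D [HD1 [HD2 [HD3 HD4]]]]; auto.
      { intros x [Hx| ->]; auto. destruct w as [Dw [Hw1 Hw2]]. simpl in *. auto. }
      { apply room_all. }
      set (w' := exist (fun D => (forall x, D x -> In x l) /\ sat D) D (conj HD2 HD3) : W l).
      assert (Hle : Wle l w w') by (intros x Hx; apply HD1; left; auto).
      assert (Hfc : forces (Wle l) (WV l) w' c) by (apply (IHc Hc w'); simpl; apply HD1; right; auto).
      apply (proj2 (IHd Hd w') HD4). simpl in Hf. apply Hf; auto.
Qed.

Lemma pow_bound n : 4 <= n -> (n + 1) * (n + 2) <= 2 ^ (n + 1).
Proof.
  induction 1.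
  - simpl. lia.
  - rewrite Nat.add_succ_l, Nat.pow_succ_r'. nia.
Qed.

Theorem theorem1 (alpha : form) :
  tautology alpha ->
  exists h, h <= degree alpha * 2 ^ (degree alpha + 1) /\ deriv [] alpha h.
Proof.
  intros Ht.
  destruct (le_lt_dec 4 (degree alpha)) as [Hd|Hd].
  - set (l := sub alpha).
    assert (Hcl : closed l) by (intros a b; apply sub_closed).
    assert (HPr : Pr (fun _ => False) alpha).
    { apply NNPP. intros nPr.
      destruct (saturate l Hcl (length l) (fun _ => False) alpha) as [D [HD1 [HD2 [HD3 HD4]]]].
      { intros x []. }
      { apply room_all. }
      { exact nPr. }
      set (w := exist (fun D => (forall x, D x -> In x l) /\ sat D) D (conj HD2 HD3) : W l).
      apply (proj2 (truth l Hcl alpha (sub_self alpha) w) HD4).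
      apply Ht. apply W_po. apply W_mono. }
    destruct HPr as [h Hh].
    assert (Hc := compress l Hcl (length l) (fun _ => False) (fun x H => match H with end)
                    (room_all _ _) alpha h (sub_self alpha) Hh).
    destruct (translate l Hcl _ _ _ Hc [] (NoDup_nil _)) as [h' [Hh' Hder]].
    + intros x; simpl; tauto.
    + intros x [].
    + apply sub_self.
    + exists h'. split; auto. unfold l in Hh'. rewrite sub_len in Hh'.
      assert (Hp := pow_bound _ Hd). nia.
  - destruct alpha as [x|[x|a1 a2] [y|b1 b2]]; simpl in Hd;
      try (pose proof (sub_len a1); pose proof (sub_len a2); pose proof (sub_len b1);
           pose proof (sub_len b2); destruct a1, a2, b1, b2; simpl in *; lia);
      try (destruct a1, a2; simpl in *; lia); try (destruct b1, b2; simpl in *; lia).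
    + exfalso.
      apply (Ht unit (fun _ _ => True) (fun _ _ => False)); auto.
      * split; [auto|split; auto]. intros [] [] _ _; auto.
      * intros ? ? ? ? [].
      * exact tt.
    + assert (y = x).
      { assert (H : forces (fun _ _ : unit => True) (fun _ n => n = x) tt (Imp (Atom x) (Atom y))).
        { apply Ht. split; [auto|split; auto]. intros [] [] _ _; auto.
          intros ? ? ? ? ?; auto. }
        simpl in H. apply (H tt I eq_refl). }
      subst. exists 2. split; [simpl; lia|].
      apply (d_impR []). exact (d_ax [] (Atom x)).
Qed.
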